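(* There is a constant $C>0$ depending only on $d$ such that for all $p\in\mathbb{R}^d\setminus\{0\}$ and $t>0$: $H(tp)=tH(p)$; $C^{-1}|p|\le H(p)\le C|p|$; and $\liminf_{q\to p}H(q)\ge H(p)$.
   Context: Discrete Laplacian on $\mathbb{Z}^d$: $\Delta u(x)=\sum_{i=1}^d(u(x+e_i)+u(x-e_i)-2u(x))$. For $p\ne0$, $H(p)=\Delta u_p(0)$ where $u_p:\mathbb{Z}^d\to\mathbb{R}$ is the unique solution of $\Delta u=0$ on $\{p\cdot x>0\}$, $u=0$ on $\{p\cdot x\le0\}$, $\sup_{p\cdot x>0}|u(x)-p\cdot x|<\infty$. *)

(* Defs.v *)
From mathcomp Require Import ssreflect ssrfun ssrbool eqtype ssrnat seq fintype.
From Stdlib Require Import Reals ZArith ClassicalEpsilon.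

Set Implicit Arguments.
Unset Strict Implicit.

Open Scope R_scope.

Definition pt (d : nat) := 'I_d -> Z.
Definition vec (d : nat) := 'I_d -> R.

Definition sumI (d : nat) (f : 'I_d -> R) : R :=
  foldr Rplus 0 (map f (enum 'I_d)).

Definition dotZ (d : nat) (p : vec d) (x : pt d) : R :=
  sumI (fun i => p i * IZR (x i)).

Definition vnorm (d : nat) (p : vec d) : R := sqrt (sumI (fun i => p i * p i)).

Definition vscale (d : nat) (t : R) (p : vec d) : vec d := fun i => t * p i.
Definition vsub (d : nat) (p q : vec d) : vec d := fun i => p i - q i.

Definition shift (d : nat) (x : pt d) (i : 'I_d) (s : Z) : pt d :=
  fun j => if j == i then (x j + s)%Z else x j.

Definition origin (d : nat) : pt d := fun _ => 0%Z.

Definition Lap (d : nat) (u : pt d -> R) (x : pt d) : R :=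
  sumI (fun i => u (shift x i 1%Z) + u (shift x i (-1)%Z) - 2 * u x).

Definition IsSol (d : nat) (p : vec d) (u : pt d -> R) : Prop :=
  (forall x : pt d, dotZ p x > 0 -> Lap u x = 0) /\
  (forall x : pt d, dotZ p x <= 0 -> u x = 0) /\
  (exists M : R, forall x : pt d, dotZ p x > 0 -> Rabs (u x - dotZ p x) <= M).

Definition u_sol (d : nat) (p : vec d) : pt d -> R :=
  epsilon (inhabits (fun _ : pt d => 0)) (IsSol p).

Definition H (d : nat) (p : vec d) : R := Lap (u_sol p) (@origin d).

Definition vnonzero (d : nat) (p : vec d) : Prop := exists i : 'I_d, p i <> 0.

(* Main.v *)
Require Import Defs.
From mathcomp Require Import ssreflect ssrfun ssrbool eqtype ssrnat seq fintype.
From Stdlib Require Import Reals ZArith ClassicalEpsilon Classical Lra Lia FunctionalExtensionality.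
Open Scope R_scope.
Set Implicit Arguments.
Unset Strict Implicit.

Definition sumL {d : nat} (l : seq 'I_d) (f : 'I_d -> R) : R := foldr Rplus 0 (map f l).

Lemma sumL_ext d (l : seq 'I_d) f g : (forall i, f i = g i) -> sumL l f = sumL l g.
Proof. move=> H; elim: l => [|a l IH] //=. by rewrite /sumL /= in IH *; rewrite IH H. Qed.

Lemma sumL_add d (l : seq 'I_d) f g : sumL l (fun i => f i + g i) = sumL l f + sumL l g.
Proof. elim: l => [|a l IH]; rewrite /sumL /=; [lra| rewrite /sumL in IH; rewrite IH; lra]. Qed.

Lemma sumL_sub d (l : seq 'I_d) f g : sumL l (fun i => f i - g i) = sumL l f - sumL l g.
Proof. elim: l => [|a l IH]; rewrite /sumL /=; [lra| rewrite /sumL in IH; rewrite IH; lra]. Qed.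

Lemma sumL_scal d (l : seq 'I_d) c f : sumL l (fun i => c * f i) = c * sumL l f.
Proof. elim: l => [|a l IH]; rewrite /sumL /=; [lra| rewrite /sumL in IH; rewrite IH; lra]. Qed.

Lemma sumL_const d (l : seq 'I_d) c : sumL l (fun _ => c) = c * INR (size l).
Proof. elim: l => [|a l IH]; first (rewrite /sumL /=; lra).
have -> : size (a :: l) = S (size l) by []. rewrite S_INR -[sumL _ _]/(c + sumL l (fun _ => c)) IH; lra. Qed.

Lemma sumL_le d (l : seq 'I_d) f g : (forall i, f i <= g i) -> sumL l f <= sumL l g.
Proof. move=> H; elim: l => [|a l IH]; rewrite /sumL /=; [lra| rewrite /sumL in IH; have := H a; lra]. Qed.

Lemma sumL_abs d (l : seq 'I_d) f : Rabs (sumL l f) <= sumL l (fun i => Rabs (f i)).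
Proof. elim: l => [|a l IH]; rewrite /sumL /=.
- rewrite Rabs_R0; lra.
- rewrite /sumL in IH; eapply Rle_trans; [apply Rabs_triang| lra]. Qed.

Lemma sumL_term d (l : seq 'I_d) f i : (forall j, 0 <= f j) -> i \in l -> f i <= sumL l f.
Proof.
move=> H; elim: l => [|a l IH] //=; rewrite inE => /orP [/eqP ->|Hi].
- have : 0 <= sumL l f by (have := @sumL_le _ l (fun _ => 0) f H; rewrite sumL_const; lra).
  rewrite /sumL /=; lra.
- have := IH Hi; have := H a; rewrite /sumL /=; lra.
Qed.

Lemma sumL_ind d (l : seq 'I_d) i a : uniq l ->
  sumL l (fun j => if j == i then a else 0) = if i \in l then a else 0.
Proof.
elim: l => [|b l IH] //= /andP [Hb Hu]; rewrite /sumL /=; rewrite /sumL in IH; rewrite IH // inE.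
have [Heq|Hne] := eqVneq b i.
- subst b. rewrite (negbTE Hb) /=; lra.
- rewrite /=; lra.
Qed.

Lemma sumL_sq d (l : seq 'I_d) f : (forall j, 0 <= f j) ->
  sumL l (fun j => f j * f j) <= sumL l f * sumL l f.
Proof.
move=> H; elim: l => [|a l IH]; rewrite /sumL /=; first lra. rewrite /sumL in IH.
have : 0 <= foldr Rplus 0 (map f l) by (have := @sumL_le _ l (fun _ => 0) f H; rewrite sumL_const /sumL; lra).
have := H a; nra.
Qed.

Lemma sumI_L d (f : 'I_d -> R) : sumI f = sumL (enum 'I_d) f.
Proof. reflexivity. Qed.

Lemma sumI_const d c : @sumI d (fun _ => c) = c * INR d.
Proof. by rewrite sumI_L sumL_const size_enum_ord. Qed.

Lemma sumI_ind d (i : 'I_d) a : sumI (fun j => if j == i then a else 0) = a.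
Proof. by rewrite sumI_L sumL_ind ?enum_uniq // mem_enum. Qed.

Lemma sumI_term d (f : 'I_d -> R) i : (forall j, 0 <= f j) -> f i <= sumI f.
Proof. move=> H; apply: sumL_term => //; by rewrite mem_enum. Qed.


Definition L1 {d} (q : vec d) := sumI (fun i => Rabs (q i)).
Definition N2 {d} (q : vec d) := sumI (fun i => q i * q i).
Definition sq {d} (x : pt d) := sumI (fun i => IZR (x i) * IZR (x i)).
Definition nb {d} (u : pt d -> R) (x : pt d) :=
  sumI (fun i => u (Defs.shift x i 1) + u (Defs.shift x i (-1))).
Definition bx {d} (r : R) (y : pt d) := forall i, Rabs (IZR (y i)) <= r.

Lemma sumI_ext d (f g : 'I_d -> R) : (forall i, f i = g i) -> sumI f = sumI g.
Proof. exact: sumL_ext. Qed.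
Lemma sumI_add d (f g : 'I_d -> R) : sumI (fun i => f i + g i) = sumI f + sumI g.
Proof. exact: sumL_add. Qed.
Lemma sumI_sub d (f g : 'I_d -> R) : sumI (fun i => f i - g i) = sumI f - sumI g.
Proof. exact: sumL_sub. Qed.
Lemma sumI_scal d c (f : 'I_d -> R) : sumI (fun i => c * f i) = c * sumI f.
Proof. exact: sumL_scal. Qed.
Lemma sumI_le d (f g : 'I_d -> R) : (forall i, f i <= g i) -> sumI f <= sumI g.
Proof. exact: sumL_le. Qed.
Lemma sumI_abs d (f : 'I_d -> R) : Rabs (sumI f) <= sumI (fun i => Rabs (f i)).
Proof. exact: sumL_abs. Qed.
Lemma sumI_ge0 d (f : 'I_d -> R) : (forall i, 0 <= f i) -> 0 <= sumI f.
Proof. move=> H; have := @sumI_le d (fun _ => 0) f H; rewrite sumI_const; lra. Qed.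

Lemma dot_shift d (q : vec d) x i s : dotZ q (Defs.shift x i s) = dotZ q x + q i * IZR s.
Proof.
rewrite /dotZ -(sumI_ind i (q i * IZR s)) -sumI_add; apply: sumI_ext => j.
rewrite /Defs.shift; case: (eqVneq j i) => [->|_]; rewrite ?plus_IZR; ring.
Qed.

Lemma sq_shift d (x : pt d) i s : sq (Defs.shift x i s) = sq x + (2 * IZR (x i) * IZR s + IZR s * IZR s).
Proof.
rewrite /sq -(sumI_ind i (2 * IZR (x i) * IZR s + IZR s * IZR s)) -sumI_add; apply: sumI_ext => j.
rewrite /Defs.shift; case: (eqVneq j i) => [->|_]; rewrite ?plus_IZR; ring.
Qed.

Lemma Lap_nb d (u : pt d -> R) x : Lap u x = nb u x - 2 * INR d * u x.
Proof. rewrite /Lap /nb sumI_sub sumI_const; ring. Qed.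

Lemma Lap_quad d (q : vec d) al be ga de x :
  Lap (fun y => al * dotZ q y + be * sq y + ga * (dotZ q y * dotZ q y) + de) x
  = 2 * be * INR d + 2 * ga * N2 q.
Proof.
rewrite /Lap (sumI_ext (g := fun i => 2 * be + 2 * ga * (q i * q i))).
- by rewrite sumI_add sumI_const sumI_scal /N2; ring.
- move=> i; rewrite !dot_shift !sq_shift; ring.
Qed.

Lemma Lap_lin d (u v : pt d -> R) a b x :
  Lap (fun y => a * u y + b * v y) x = a * Lap u x + b * Lap v x.
Proof.
rewrite /Lap -!sumI_scal -sumI_add; apply: sumI_ext => i; ring.
Qed.

Lemma nb_le d (u v : pt d -> R) x : (forall y, u y <= v y) -> nb u x <= nb v x.
Proof. move=> H; apply: sumI_le => i; have := H (Defs.shift x i 1); have := H (Defs.shift x i (-1)); lra. Qed.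

Lemma L1_ge0 d (q : vec d) : 0 <= L1 q.
Proof. apply: sumI_ge0 => i; apply: Rabs_pos. Qed.
Lemma N2_ge0 d (q : vec d) : 0 <= N2 q.
Proof. apply: sumI_ge0 => i; nra. Qed.
Lemma sq_ge0 d (x : pt d) : 0 <= sq x.
Proof. apply: sumI_ge0 => i; nra. Qed.
Lemma abs_le_L1 d (q : vec d) i : Rabs (q i) <= L1 q.
Proof. apply: (sumI_term (f := fun i => Rabs (q i))) => j; apply: Rabs_pos. Qed.
Lemma sq_le_N2 d (q : vec d) i : q i * q i <= N2 q.
Proof. apply: (sumI_term (f := fun i => q i * q i)) => j; nra. Qed.
Lemma term_le_sq d (x : pt d) i : IZR (x i) * IZR (x i) <= sq x.
Proof. apply: (sumI_term (f := fun i => IZR (x i) * IZR (x i))) => j; nra. Qed.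

Lemma abs_le_vnorm d (q : vec d) i : Rabs (q i) <= vnorm q.
Proof.
rewrite /vnorm -/(N2 q) -(sqrt_Rsqr_abs (q i)); apply: sqrt_le_1_alt.
rewrite /Rsqr; apply: sq_le_N2.
Qed.

Lemma vnorm_le_L1 d (q : vec d) : vnorm q <= L1 q.
Proof.
rewrite /vnorm -(sqrt_Rsqr (L1 q)); last exact: L1_ge0.
apply: sqrt_le_1_alt; rewrite /Rsqr /L1.
rewrite (sumI_ext (g := fun i => Rabs (q i) * Rabs (q i))); last by move=> i; rewrite -Rabs_mult Rabs_right; nra.
apply: sumL_sq => j; apply: Rabs_pos.
Qed.

Lemma L1_le_vnorm d (q : vec d) : L1 q <= INR d * vnorm q.
Proof. rewrite /L1 -[INR d * _]Rmult_comm -sumI_const; apply: sumI_le => i; apply: abs_le_vnorm. Qed.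

Lemma nz_N2 d (q : vec d) : vnonzero q -> 0 < N2 q.
Proof. case=> i Hi; have := sq_le_N2 q i; have : 0 < q i * q i by nra. lra. Qed.

Lemma nz_L1 d (q : vec d) : vnonzero q -> 0 < L1 q.
Proof. case=> i Hi; have := abs_le_L1 q i; have := Rabs_pos_lt _ Hi; lra. Qed.

Lemma nz_d d (q : vec d) : vnonzero q -> 0 < INR d.
Proof. case=> i _; apply: lt_0_INR; case: i => /= m Hm; apply/ltP; move: Hm; case: d {q}=> //. Qed.

Lemma dot_bound d (q : vec d) r y : bx r y -> Rabs (dotZ q y) <= L1 q * r.
Proof.
move=> H; eapply Rle_trans; first apply: sumI_abs.
rewrite /L1 Rmult_comm -sumI_scal; apply: sumI_le => i.
rewrite Rabs_mult Rmult_comm; apply: Rmult_le_compat_r; [apply: Rabs_pos| apply: H].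
Qed.

Lemma dot_sub d (p q : vec d) y : dotZ p y - dotZ q y = dotZ (vsub p q) y.
Proof. rewrite /dotZ -sumI_sub; apply: sumI_ext => i; rewrite /vsub; ring. Qed.

Lemma dot_scale d (q : vec d) t y : dotZ (vscale t q) y = t * dotZ q y.
Proof. rewrite /dotZ -sumI_scal; apply: sumI_ext => i; rewrite /vscale; ring. Qed.

Lemma dot_origin d (q : vec d) : dotZ q (@origin d) = 0.
Proof. rewrite /dotZ (sumI_ext (g := fun _ => 0 * 0)) ?sumI_const; first ring. move=> i; rewrite /origin; ring. Qed.

Lemma bx_shift d (x : pt d) r i s : bx r x -> Rabs (IZR s) <= 1 -> bx (r + 1) (Defs.shift x i s).
Proof.
move=> H Hs j; rewrite /Defs.shift; case: (eqVneq j i) => [->|_].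
- rewrite plus_IZR; eapply Rle_trans; [apply Rabs_triang| have := H i; lra].
- have := H j; lra.
Qed.


Lemma bx_mono d r r' (y : pt d) : r <= r' -> bx r y -> bx r' y.
Proof. move=> H Hy i; have := Hy i; lra. Qed.

Lemma abs_bounds a : -Rabs a <= a <= Rabs a.
Proof. have := Rle_abs a; have := Rle_abs (-a); rewrite Rabs_Ropp; lra. Qed.

Lemma sq_bx d r (y : pt d) : bx r y -> sq y <= INR d * (r * r).
Proof.
move=> H; rewrite /sq Rmult_comm -sumI_const; apply: sumI_le => i.
have := H i; have := abs_bounds (IZR (y i)); nra.
Qed.

Lemma sq_far d r (y : pt d) : 0 <= r -> ~ bx r y -> r * r <= sq y.
Proof.
move=> Hr H; have [i Hi] : exists i, ~ Rabs (IZR (y i)) <= r.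
  by apply: not_all_ex_not => Hall; apply: H.
have := term_le_sq y i; have := abs_bounds (IZR (y i)).
have : r < Rabs (IZR (y i)) by lra.
case: (Rle_lt_dec 0 (IZR (y i))) => Hs.
- rewrite Rabs_right; nra.
- rewrite Rabs_left; nra.
Qed.

Definition Gb d (q : vec d) (K M a Rr eta : R) (y : pt d) : R :=
  2*K*(a*(dotZ q y + M)/Rr + (sq y - (INR d / N2 q) * (dotZ q y * dotZ q y) + (INR d / N2 q)*(M*M))/(Rr*Rr))
  + eta*(INR d*((Rr+1)*(Rr+1)) - sq y).

Lemma Gb_Lap d (q : vec d) K M a Rr eta x : vnonzero q -> 0 < Rr ->
  Lap (Gb q K M a Rr eta) x = - 2 * INR d * eta.
Proof.
move=> Hq HR; have HN := nz_N2 Hq.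
have -> : Gb q K M a Rr eta = fun y => (2*K*a/Rr) * dotZ q y + (2*K/(Rr*Rr) - eta) * sq y
     + (- 2*K*(INR d / N2 q)/(Rr*Rr)) * (dotZ q y * dotZ q y)
     + (2*K*a*M/Rr + 2*K*(INR d/N2 q)*(M*M)/(Rr*Rr) + eta*(INR d*((Rr+1)*(Rr+1)))).
  apply: functional_extensionality => y; rewrite /Gb; field; lra.
rewrite Lap_quad; field; lra.
Qed.

Lemma Gb_nn d (q : vec d) K M a Rr eta y : vnonzero q -> 0 <= K -> 0 <= a -> 0 < Rr -> 0 <= eta ->
  bx (Rr+1) y -> - M < dotZ q y -> dotZ q y <= 0 -> 0 <= Gb q K M a Rr eta y.
Proof.
move=> Hq HK Ha HR He Hb H1 H2; have HN := nz_N2 Hq; have Hd := nz_d Hq.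
have Hsq := sq_ge0 y; have Hsb := sq_bx Hb.
set t := dotZ q y in H1 H2 *.
have Hc : 0 <= INR d / N2 q by apply: Rle_mult_inv_pos; lra.
have T1 : 0 <= a * (t + M) / Rr by apply: Rle_mult_inv_pos; nra.
have T2 : 0 <= (sq y - INR d / N2 q * (t * t) + INR d / N2 q * (M * M)) / (Rr * Rr).
  apply: Rle_mult_inv_pos; last nra.
  have : t * t <= M * M by nra. nra.
rewrite /Gb -/t; nra.
Qed.

Lemma le_div_r a b c : 0 < c -> a * c <= b -> a <= b / c.
Proof.
move=> Hc H; have -> : a = (a * c) / c by field; lra.
apply: Rmult_le_compat_r => //; left; apply: Rinv_0_lt_compat => //.
Qed.

Definition aco (dd M nu : R) := 4*dd*M*(4*dd*M*M/nu + 1)/nu.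

Lemma Gb_far d (q : vec d) K M nu Rr eta y : vnonzero q -> L1 q <= M -> 0 < nu -> nu <= N2 q ->
  1 <= Rr -> 0 <= K -> 0 <= eta ->
  bx (Rr+1) y -> ~ bx Rr y -> 0 < dotZ q y -> K <= Gb q K M (aco (INR d) M nu) Rr eta y.
Proof.
move=> Hq HM Hnu HnuN HR HK He Hb Hnb Ht.
have HN := nz_N2 Hq; have Hd := nz_d Hq; have HL := nz_L1 Hq.
have Hsq := sq_far (ltac:(lra) : 0 <= Rr) Hnb; have Hsb := sq_bx Hb.
have Htb := dot_bound q Hb.
set t := dotZ q y in Ht Htb *.
have Ht2 : t <= 2 * M * Rr by move: Htb; rewrite Rabs_right; nra.
set c := INR d / N2 q.
have Hc : c * N2 q = INR d by rewrite /c; field; lra.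
have Hc0 : 0 < c by apply: Rdiv_lt_0_compat.
have Hcnu : c * nu <= INR d by nra.
set a := aco (INR d) M nu.
have Ha : a * nu * nu = 4 * INR d * M * (4 * INR d * M * M + nu) by rewrite /a /aco; field; lra.
have Eq : Gb q K M a Rr eta y =
  2*K*(a*(t + M)/Rr + (sq y - c * (t * t) + c*(M*M))/(Rr*Rr)) + eta*(INR d*((Rr+1)*(Rr+1)) - sq y) by [].
rewrite Eq; clear Eq.
have T3 : 0 <= eta*(INR d*((Rr+1)*(Rr+1)) - sq y) by nra.
suff : 1/2 <= a*(t + M)/Rr + (sq y - c * (t * t) + c*(M*M))/(Rr*Rr) by nra.
have HR2 : 0 < Rr * Rr by nra.
case: (Rle_lt_dec (c * (t*t)) (Rr*Rr/2)) => Hcase.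
- have T1 : 0 <= a*(t + M)/Rr.
    apply: Rle_mult_inv_pos; last lra.
    have : 0 <= a by rewrite /a /aco; apply: Rle_mult_inv_pos; try nra;
      apply: Rmult_le_pos; [nra| have : 0 <= 4 * INR d * M * M / nu by apply: Rle_mult_inv_pos; nra]; lra.
    nra.
  have T2 : 1/2 <= (sq y - c * (t * t) + c*(M*M))/(Rr*Rr).
    have ? : 0 <= c * (M * M) by nra. apply: le_div_r => //; nra.
  lra.
-
  have Htl : Rr * N2 q <= 4 * INR d * M * t.
    have H1 : Rr * Rr * N2 q < 2 * INR d * (t * t).
      have : Rr * Rr / 2 * N2 q < c * (t * t) * N2 q by apply: Rmult_lt_compat_r.
      have -> : c * (t * t) * N2 q = INR d * (t * t) by rewrite -Hc; ring.
      lra.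
    have H2 : t * t <= 2 * M * Rr * t by nra.
    have H3 : Rr * (Rr * N2 q) < Rr * (4 * INR d * M * t) by nra.
    have := Rmult_lt_reg_l _ _ _ (ltac:(lra) : 0 < Rr) H3; lra.
  have T1 : 4 * INR d * M * M / nu + 1 <= a*(t + M)/Rr.
    apply: le_div_r; first lra.
    apply: (Rmult_le_reg_r (nu * nu)); first nra.
    have Hnn : 0 < nu * nu by nra.
    have HM0 : 0 < M by lra.
    have Hap : 0 <= a.
      have : 0 <= a * (nu * nu) by rewrite -Rmult_assoc Ha; apply: Rmult_le_pos; nra.
      move=> H; apply: (Rmult_le_reg_r (nu*nu)); nra.
    have : (4 * INR d * M * M / nu + 1) * Rr * (nu * nu) = (4 * INR d * M * M + nu) * Rr * nu by field; lra.
    move=> ->.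
    have E1 : a * (t + M) * (nu * nu) = (4 * INR d * M * t) * (4 * INR d * M * M + nu) + a * M * (nu * nu).
      have -> : a * (t + M) * (nu * nu) = t * (a * nu * nu) + a * M * (nu * nu) by ring.
      rewrite Ha; ring.
    rewrite E1.
    have Hp : 0 <= 4 * INR d * M * M + nu by nra.
    have : Rr * nu * (4 * INR d * M * M + nu) <= (4 * INR d * M * t) * (4 * INR d * M * M + nu).
      apply: Rmult_le_compat_r => //; nra.
    have : 0 <= a * M * (nu * nu) by apply: Rmult_le_pos; [apply: Rmult_le_pos|]; lra.
    nra.
  have T2 : - (4 * INR d * M * M / nu) <= (sq y - c * (t * t) + c*(M*M))/(Rr*Rr).
    apply: le_div_r => //.
    have : c * (t*t) <= c * (4 * M * M * Rr * Rr).
      apply: Rmult_le_compat_l; first lra. have : t * t <= (2*M*Rr)*(2*M*Rr) by nra. lra.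
    have : c * (4 * M * M * Rr * Rr) <= 4 * INR d * M * M / nu * (Rr * Rr).
      have -> : 4 * INR d * M * M / nu * (Rr * Rr) = (INR d / nu) * (4 * M * M * Rr * Rr) by field; lra.
      apply: Rmult_le_compat_r; first nra.
      rewrite /c; apply: Rmult_le_compat_l; first lra.
      apply: Rinv_le_contravar; lra.
    nra.
  lra.
Qed.

Lemma Gb_lb d (q : vec d) K M a Rr eta y : vnonzero q -> L1 q <= M -> 0 <= K -> 0 <= a -> 1 <= Rr -> 0 <= eta ->
  bx (Rr+1) y -> 0 < dotZ q y ->
  - (2*K*((INR d / N2 q)*((M*(Rr+1))*(M*(Rr+1))))/(Rr*Rr)) <= Gb q K M a Rr eta y.
Proof.
move=> Hq HM HK Ha HR He Hb Ht.
have HN := nz_N2 Hq; have Hd := nz_d Hq; have HL := nz_L1 Hq.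
have Hsq := sq_ge0 y; have Hsb := sq_bx Hb.
have Htb := dot_bound q Hb.
rewrite /Gb; set t := dotZ q y in Ht Htb *.
set c := INR d / N2 q.
have Hc0 : 0 < c by apply: Rdiv_lt_0_compat.
have HR2 : 0 < Rr * Rr by nra.
have T1 : 0 <= a * (t + M) / Rr by apply: Rle_mult_inv_pos; nra.
have T3 : 0 <= eta*(INR d*((Rr+1)*(Rr+1)) - sq y) by nra.
have Htt : t * t <= (M*(Rr+1))*(M*(Rr+1)).
  move: Htb; rewrite Rabs_right; last lra. move=> H.
  have : t <= M * (Rr+1) by nra. nra.
have T2 : - (c*((M*(Rr+1))*(M*(Rr+1))))/(Rr*Rr) <= (sq y - c * (t * t) + c * (M * M)) / (Rr * Rr).
  apply: Rmult_le_compat_r; first (left; apply: Rinv_0_lt_compat; lra).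
  have : c * (t*t) <= c * ((M*(Rr+1))*(M*(Rr+1))) by apply: Rmult_le_compat_l; lra.
  have : 0 <= c * (M * M) by nra.
  lra.
have : - (2 * K * (c * (M * (Rr + 1) * (M * (Rr + 1)))) / (Rr * Rr)) = 2 * K * (- (c*((M*(Rr+1))*(M*(Rr+1))))/(Rr*Rr)) by field; lra.
move=> ->. nra.
Qed.

Lemma fmp_eta d (q : vec d) M nu Rr K eta (w : pt d -> R) :
  vnonzero q -> L1 q <= M -> 0 < nu -> nu <= N2 q -> 1 <= Rr -> 0 <= K -> 0 < eta ->
  (forall x, 0 < dotZ q x -> bx Rr x -> 0 <= Lap w x) ->
  (forall y, bx (Rr+1) y -> - M < dotZ q y -> dotZ q y <= 0 -> w y <= 0) ->
  (forall y, bx (Rr+1) y -> 0 < dotZ q y -> w y <= K) ->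
  forall x0, 0 < dotZ q x0 -> bx Rr x0 -> w x0 <= Gb q K M (aco (INR d) M nu) Rr eta x0.
Proof.
move=> Hq HM Hnu HnuN HR HK He H1 H2 H3 x0 Hx0 Hbx0.
have HN := nz_N2 Hq; have Hd := nz_d Hq; have HL := nz_L1 Hq.
set a := aco (INR d) M nu.
have Ha : 0 <= a.
  rewrite /a /aco; apply: Rle_mult_inv_pos; last lra.
  apply: Rmult_le_pos; first nra.
  have : 0 <= 4 * INR d * M * M / nu by apply: Rle_mult_inv_pos; nra.
  lra.
apply: Rnot_lt_le => Hcon.
set phi := fun y => 1 * w y + -1 * Gb q K M a Rr eta y.
set E := fun r => exists y, 0 < dotZ q y /\ bx Rr y /\ r = phi y.
set B := 2*K*((INR d / N2 q)*((M*(Rr+1))*(M*(Rr+1))))/(Rr*Rr).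
have Hbnd : bound E.
  exists (K + B) => r [y [Hy [Hby ->]]].
  have Hb1 : bx (Rr+1) y by apply: bx_mono Hby; lra.
  have := H3 y Hb1 Hy; have := Gb_lb (a:=a) (eta:=eta) Hq HM HK Ha HR (Rlt_le _ _ He) Hb1 Hy.
  rewrite /phi -/B; lra.
have HE : exists r, E r by exists (phi x0), x0.
have [s Hs] := completeness E Hbnd HE.
have Hx0s : phi x0 <= s by apply: (proj1 Hs); exists x0.
have Hphi0 : 0 < phi x0 by rewrite /phi; lra.
have [y [Hy [Hby Hys]]] : exists y, 0 < dotZ q y /\ bx Rr y /\ s - eta < phi y.
  apply: NNPP => Hno.
  have : s <= s - eta.
    apply: (proj2 Hs) => r [y [Hy [Hby ->]]].
    apply: Rnot_lt_le => Hlt; apply: Hno; by exists y.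
  lra.
have HR0 : 0 < Rr by lra.
have He0 : 0 <= eta by lra.
have Hnbr : forall z, bx (Rr+1) z -> - M < dotZ q z -> phi z <= s.
  move=> z Hbz Hdz.
  case: (Rle_lt_dec (dotZ q z) 0) => Hzs.
  - have := H2 z Hbz Hdz Hzs; have := Gb_nn (K:=K) (a:=a) (eta:=eta) Hq HK Ha HR0 He0 Hbz Hdz Hzs.
    rewrite /phi; lra.
  - case: (classic (bx Rr z)) => Hbr.
    + apply: (proj1 Hs); by exists z.
    + have := H3 z Hbz Hzs; have Hf := @Gb_far d q K M nu Rr eta z Hq HM Hnu HnuN HR HK He0 Hbz Hbr Hzs.
      rewrite -/a in Hf; rewrite /phi; lra.
have Hnb : nb phi y <= 2 * s * INR d.
  have -> : 2 * s * INR d = (s + s) * INR d by ring.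
  rewrite /nb -sumI_const.
  apply: sumI_le => i.
  have Hqi := abs_le_L1 q i.
  have Hab := abs_bounds (q i).
  have Hb1 : forall s0, Rabs (IZR s0) <= 1 -> bx (Rr+1) (Defs.shift y i s0) by move=> s0 Hs0; apply: bx_shift.
  have P1 : Rabs (IZR 1) <= 1 by rewrite Rabs_right; lra.
  have P2 : Rabs (IZR (-1)) <= 1 by rewrite Rabs_left; lra.
  have D1 : - M < dotZ q (Defs.shift y i 1) by rewrite dot_shift; lra.
  have D2 : - M < dotZ q (Defs.shift y i (-1)) by rewrite dot_shift; lra.
  have A1 := Hnbr _ (Hb1 _ P1) D1.
  have A2 := Hnbr _ (Hb1 _ P2) D2.
  lra.
have HLap : Lap phi y = Lap w y + 2 * INR d * eta.
  rewrite /phi Lap_lin Gb_Lap //; try ring; lra.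
have := H1 y Hy Hby.
rewrite Lap_nb in HLap.
nra.
Qed.

Lemma fmp d (q : vec d) M nu Rr K (w : pt d -> R) :
  vnonzero q -> L1 q <= M -> 0 < nu -> nu <= N2 q -> 1 <= Rr -> 0 <= K ->
  (forall x, 0 < dotZ q x -> bx Rr x -> 0 <= Lap w x) ->
  (forall y, bx (Rr+1) y -> - M < dotZ q y -> dotZ q y <= 0 -> w y <= 0) ->
  (forall y, bx (Rr+1) y -> 0 < dotZ q y -> w y <= K) ->
  forall x0, 0 < dotZ q x0 -> bx Rr x0 ->
  w x0 <= 2*K*(aco (INR d) M nu * (dotZ q x0 + M)/Rr + (sq x0 + INR d / nu * (M*M))/(Rr*Rr)).
Proof.
move=> Hq HM Hnu HnuN HR HK H1 H2 H3 x0 Hx0 Hb0.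
have HN := nz_N2 Hq; have Hd := nz_d Hq.
set a := aco (INR d) M nu.
set T := INR d*((Rr+1)*(Rr+1)) - sq x0.
have HG : forall eta, Gb q K M a Rr eta x0 = Gb q K M a Rr 0 x0 + eta * T.
  by move=> eta; rewrite /Gb /T; ring.
have Hw : w x0 <= Gb q K M a Rr 0 x0.
  apply: Rnot_lt_le => Hlt.
  have HT : 0 < Rabs T + 1 by have := Rabs_pos T; lra.
  set eta := (w x0 - Gb q K M a Rr 0 x0) / (2 * (Rabs T + 1)).
  have He : 0 < eta by apply: Rdiv_lt_0_compat; lra.
  have := @fmp_eta d q M nu Rr K eta w Hq HM Hnu HnuN HR HK He H1 H2 H3 x0 Hx0 Hb0.
  rewrite -/a HG.
  have : eta * T <= eta * (Rabs T + 1) by apply: Rmult_le_compat_l; [lra| have := Rle_abs T; lra].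
  have : eta * (Rabs T + 1) = (w x0 - Gb q K M a Rr 0 x0) / 2 by rewrite /eta; field; lra.
  lra.
apply: (Rle_trans _ _ _ Hw).
rewrite /Gb.
have HR2 : 0 < Rr * Rr by nra.
have Hc : INR d / N2 q * (M * M) <= INR d / nu * (M * M).
  apply: Rmult_le_compat_r; first nra.
  apply: Rmult_le_compat_l; first lra.
  apply: Rinv_le_contravar; lra.
have Hc2 : 0 <= INR d / N2 q * (dotZ q x0 * dotZ q x0).
  apply: Rmult_le_pos; [apply: Rle_mult_inv_pos; lra| nra].
have : (sq x0 - INR d / N2 q * (dotZ q x0 * dotZ q x0) + INR d / N2 q * (M * M)) / (Rr * Rr)
       <= (sq x0 + INR d / nu * (M * M)) / (Rr * Rr).
  apply: Rmult_le_compat_r; [left; apply: Rinv_0_lt_compat; lra| lra].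
move=> Hle.
have : 0 * (INR d * ((Rr + 1) * (Rr + 1)) - sq x0) = 0 by ring.
move=> ->.
have := Rmult_le_compat_l (2*K) _ _ (ltac:(lra) : 0 <= 2*K) (Rplus_le_compat_l (a * (dotZ q x0 + M) / Rr) _ _ Hle).
lra.
Qed.

Lemma bx_self d (x : pt d) : bx (sumI (fun j => Rabs (IZR (x j)))) x.
Proof. move=> i; apply: (sumI_term (f := fun j => Rabs (IZR (x j)))) => j; apply: Rabs_pos. Qed.

Lemma cmp d (q : vec d) (w : pt d -> R) : vnonzero q ->
  (forall x, 0 < dotZ q x -> 0 <= Lap w x) ->
  (forall y, - L1 q < dotZ q y -> dotZ q y <= 0 -> w y <= 0) ->
  (exists K, forall y, 0 < dotZ q y -> w y <= K) ->
  forall x, 0 < dotZ q x -> w x <= 0.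
Proof.
move=> Hq H1 H2 [K0 H3] x Hx.
have HN := nz_N2 Hq; have Hd := nz_d Hq; have HL := nz_L1 Hq.
set K := Rmax K0 0.
have HK : 0 <= K by apply: Rmax_r.
have H3' : forall y, 0 < dotZ q y -> w y <= K by move=> y Hy; have := H3 y Hy; have := Rmax_l K0 0; rewrite -/K; lra.
set a := aco (INR d) (L1 q) (N2 q).
have Ha : 0 <= a.
  rewrite /a /aco; apply: Rle_mult_inv_pos; last lra.
  apply: Rmult_le_pos; first nra.
  have : 0 <= 4 * INR d * L1 q * L1 q / N2 q by apply: Rle_mult_inv_pos; nra.
  lra.
set A := a * (dotZ q x + L1 q).
set B := sq x + INR d / N2 q * (L1 q * L1 q).
have HA : 0 <= A by rewrite /A; nra.
have HB : 0 <= B.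
  rewrite /B; have := sq_ge0 x; have : 0 <= INR d / N2 q * (L1 q * L1 q) by apply: Rmult_le_pos; [apply: Rle_mult_inv_pos|]; nra.
  lra.
apply: Rnot_lt_le => Hw.
set Sx := sumI (fun j => Rabs (IZR (x j))).
have HSx : 0 <= Sx by apply: sumI_ge0 => j; apply: Rabs_pos.
set Rr := 1 + Sx + 2 * K * (A + B) / w x.
have HQ : 0 <= 2 * K * (A + B) / w x by apply: Rle_mult_inv_pos; nra.
have HR : 1 <= Rr by rewrite /Rr; lra.
have Hbx : bx Rr x by apply: bx_mono (bx_self x); rewrite -/Sx /Rr; lra.
have := @fmp d q (L1 q) (N2 q) Rr K w Hq (Rle_refl _) HN (Rle_refl _) HR HK
  (fun y Hy _ => H1 y Hy) (fun y _ => H2 y) (fun y _ => H3' y) x Hx Hbx.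
rewrite -/a -/A -/B.
have E1 : A / Rr + B / (Rr * Rr) <= (A + B) / Rr.
  have : B / (Rr * Rr) <= B / Rr.
    apply: Rmult_le_compat_l => //; apply: Rinv_le_contravar; nra.
  have : (A + B) / Rr = A / Rr + B / Rr by field; lra.
  lra.
have E2 : 2 * K * ((A + B) / Rr) < w x.
  have : 2 * K * (A + B) < w x * Rr.
    have : 2 * K * (A + B) = w x * (2 * K * (A + B) / w x) by field; lra.
    rewrite /Rr; nra.
  move=> H; apply: (Rmult_lt_reg_r Rr); first lra.
  have -> : 2 * K * ((A + B) / Rr) * Rr = 2 * K * (A + B) by field; lra.
  lra.
have := Rmult_le_compat_l (2*K) _ _ (ltac:(lra) : 0 <= 2*K) E1.
lra.
Qed.


Definition Pc d (q : vec d) (v : pt d -> R) :=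
  (forall x, dotZ q x <= 0 -> v x = 0) /\
  (forall x, 0 < dotZ q x -> dotZ q x <= v x /\ v x <= dotZ q x + L1 q /\ Lap v x <= 0).

Definition v0 d (q : vec d) (x : pt d) : R :=
  if Rlt_dec 0 (dotZ q x) then dotZ q x + L1 q else 0.

Lemma nbr_dot d (q : vec d) x i s : 0 < dotZ q x -> Rabs (IZR s) <= 1 ->
  - L1 q < dotZ q (Defs.shift x i s).
Proof.
move=> Hx Hs; rewrite dot_shift.
have := abs_le_L1 q i; have := abs_bounds (q i * IZR s); rewrite Rabs_mult.
have := Rabs_pos (q i); have := Rabs_pos (IZR s); nra.
Qed.

Lemma R1abs : Rabs (IZR 1) <= 1. Proof. rewrite Rabs_right; lra. Qed.
Lemma Rm1abs : Rabs (IZR (-1)) <= 1. Proof. rewrite Rabs_left; lra. Qed.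

Lemma v0_le d (q : vec d) y : - L1 q < dotZ q y -> v0 q y <= dotZ q y + L1 q.
Proof. move=> H; rewrite /v0; case: Rlt_dec => H0 /=; lra. Qed.

Lemma Lap_dot d (q : vec d) x : sumI (fun i => dotZ q (Defs.shift x i 1) + dotZ q (Defs.shift x i (-1))) = 2 * dotZ q x * INR d.
Proof. rewrite -sumI_const; apply: sumI_ext => i; rewrite !dot_shift; ring. Qed.

Lemma v0_Pc d (q : vec d) : Pc q (v0 q).
Proof.
split.
- move=> x Hx; rewrite /v0; case: Rlt_dec => H /=; lra.
- move=> x Hx; have HL := L1_ge0 q.
  have Ev : v0 q x = dotZ q x + L1 q by rewrite /v0; case: Rlt_dec => H /=; lra.
  split; first lra; split; first lra.
  rewrite Lap_nb Ev.
  have : nb (v0 q) x <= 2 * dotZ q x * INR d + 2 * L1 q * INR d.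
    rewrite -Lap_dot.
    have -> : 2 * L1 q * INR d = (L1 q + L1 q) * INR d by ring.
    rewrite -sumI_const -sumI_add; apply: sumI_le => i.
    have := v0_le (nbr_dot i Hx R1abs); have := v0_le (nbr_dot i Hx Rm1abs); lra.
  lra.
Qed.

Definition PE d (q : vec d) (x : pt d) (r : R) := exists v, Pc q v /\ r = - v x.

Lemma Pc_ge0 d (q : vec d) v x : Pc q v -> 0 <= v x.
Proof.
move=> [H1 H2]; case: (Rle_lt_dec (dotZ q x) 0) => H.
- rewrite H1 //; lra.
- have := H2 x H; lra.
Qed.

Lemma Pc_ge_dot d (q : vec d) v x : Pc q v -> dotZ q x <= v x.
Proof.
move=> [H1 H2]; case: (Rle_lt_dec (dotZ q x) 0) => H.
- rewrite H1 //; lra.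
- have := H2 x H; lra.
Qed.

Lemma PE_lub d (q : vec d) x : exists r, is_lub (PE q x) r.
Proof.
have Hb : bound (PE q x).
  exists 0 => r [v [Hv ->]]; have := Pc_ge0 x Hv; lra.
have He : exists r, PE q x r by exists (- v0 q x), (v0 q); split => //; apply: v0_Pc.
have [r Hr] := completeness _ Hb He; by exists r.
Qed.

Definition perron d (q : vec d) (x : pt d) : R :=
  - epsilon (inhabits 0) (fun r => is_lub (PE q x) r).

Lemma perron_lub d (q : vec d) x : is_lub (PE q x) (- perron q x).
Proof. rewrite /perron Ropp_involutive; apply: epsilon_spec; apply: PE_lub. Qed.

Lemma perron_le d (q : vec d) v x : Pc q v -> perron q x <= v x.
Proof.
move=> Hv; have [H1 _] := perron_lub q x.
have := H1 (- v x) (ex_intro _ v (conj Hv erefl)); lra.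
Qed.

Lemma perron_ge d (q : vec d) x r : (forall v, Pc q v -> r <= v x) -> r <= perron q x.
Proof.
move=> H; have [_ H2] := perron_lub q x.
have : - perron q x <= - r.
  apply: H2 => s [v [Hv ->]]; have := H v Hv; lra.
lra.
Qed.

Lemma perron_Pc d (q : vec d) : vnonzero q -> Pc q (perron q).
Proof.
move=> Hq; have Hd := nz_d Hq.
split.
- move=> x Hx; have := perron_le x (v0_Pc q).
  have -> : v0 q x = 0 by rewrite /v0; case: Rlt_dec => H /=; lra.
  have : 0 <= perron q x by apply: perron_ge => v Hv; exact: (Pc_ge0 x Hv).
  lra.
- move=> x Hx; split; [|split].
  + by apply: perron_ge => v Hv; apply: Pc_ge_dot.
  + have := perron_le x (v0_Pc q).
    by rewrite /v0; case: Rlt_dec => H /=; lra.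
  + rewrite Lap_nb.
    have : nb (perron q) x / (2 * INR d) <= perron q x.
      apply: perron_ge => v [Hv1 Hv2].
      have [_ [_ HL]] := Hv2 x Hx.
      rewrite Lap_nb in HL.
      have := @nb_le d (perron q) v x (fun y => perron_le y (conj Hv1 Hv2)).
      move=> Hnb; apply: (Rmult_le_reg_r (2 * INR d)); first lra.
      have -> : nb (perron q) x / (2 * INR d) * (2 * INR d) = nb (perron q) x by field; lra.
      lra.
    move=> H; have : nb (perron q) x = nb (perron q) x / (2 * INR d) * (2 * INR d) by field; lra.
    nra.
Qed.

Lemma shift_neq d (x : pt d) i s : s <> 0%Z -> Defs.shift x i s <> x.
Proof. move=> Hs H; have := f_equal (fun f => f i) H; rewrite /Defs.shift eqxx; lia. Qed.

Lemma perron_harm d (q : vec d) x0 : vnonzero q -> 0 < dotZ q x0 -> Lap (perron q) x0 = 0.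
Proof.
move=> Hq Hx0; have Hd := nz_d Hq.
have [HP1 HP2] := perron_Pc Hq.
have [_ [Hub HL]] := HP2 x0 Hx0.
apply: Rle_antisym => //; apply: Rnot_lt_le => Hlt.
set u := perron q.
rewrite -/u in Hub HL Hlt HP1 HP2.
set c := nb u x0 / (2 * INR d).
have Hc : c < u x0.
  rewrite Lap_nb -/u in Hlt; apply: (Rmult_lt_reg_r (2 * INR d)); first lra.
  rewrite /c; have -> : nb u x0 / (2 * INR d) * (2 * INR d) = nb u x0 by field; lra.
  lra.
have Hudot : forall z, dotZ q z <= u z by move=> z; apply: Pc_ge_dot; apply: perron_Pc.
set u' := fun y => if excluded_middle_informative (y = x0) then c else u y.
have Hu'le : forall y, u' y <= u y.
  by move=> y; rewrite /u'; case: excluded_middle_informative => [E|E] /=; [rewrite E|]; lra.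
have Hnb' : nb u' x0 = nb u x0.
  apply: sumI_ext => i; rewrite /u'.
  case: excluded_middle_informative => [H|_] /=; first by exfalso; apply: (shift_neq (s := 1%Z)) H.
  case: excluded_middle_informative => [H|_] /=; first by exfalso; apply: (shift_neq (s := (-1)%Z)) H.
  done.
have Ev0 : u' x0 = c by rewrite /u'; case: excluded_middle_informative => E //=.
have Ev1 : forall y, y <> x0 -> u' y = u y.
  by move=> y Hne; rewrite /u'; case: excluded_middle_informative => E //=.
have HPc : Pc q u'.
  split.
  - move=> y Hy; rewrite Ev1; first exact: HP1.
    by move=> E; rewrite E in Hy; lra.
  - move=> y Hy; case: (classic (y = x0)) => [E|Hne].
    + subst y; rewrite Ev0; split; [|split].
      * rewrite /c; apply: (Rmult_le_reg_r (2 * INR d)); first lra.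
        have -> : nb u x0 / (2 * INR d) * (2 * INR d) = nb u x0 by field; lra.
        have : 2 * dotZ q x0 * INR d <= nb u x0.
          rewrite -Lap_dot; apply: sumI_le => i; have := Hudot (Defs.shift x0 i 1); have := Hudot (Defs.shift x0 i (-1)); lra.
        lra.
      * lra.
      * rewrite Lap_nb Hnb' Ev0.
        rewrite /c; have : nb u x0 = nb u x0 / (2 * INR d) * (2 * INR d) by field; lra.
        lra.
    + rewrite Ev1 //.
      have [A1 [A2 A3]] := HP2 y Hy; split; [lra| split; [lra|]].
      rewrite Lap_nb; rewrite Lap_nb in A3.
      have := @nb_le d u' u y Hu'le.
      rewrite Ev1 //.
      lra.
have := perron_le x0 HPc.
rewrite Ev0 -/u; lra.
Qed.

Lemma perron_sol d (q : vec d) : vnonzero q -> IsSol q (perron q).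
Proof.
move=> Hq; have [HP1 HP2] := perron_Pc Hq.
split; [|split].
- by move=> x Hx; apply: perron_harm.
- exact: HP1.
- exists (L1 q) => x Hx; have [A1 [A2 _]] := HP2 x Hx.
  rewrite Rabs_right; lra.
Qed.


Lemma sol_le d (q : vec d) u v Bd : vnonzero q ->
   (forall x, 0 < dotZ q x -> Lap u x = 0) -> (forall x, dotZ q x <= 0 -> u x = 0) ->
   (forall x, 0 < dotZ q x -> Rabs (u x - dotZ q x) <= Bd) ->
   (forall x, 0 < dotZ q x -> Lap v x = 0) -> (forall x, dotZ q x <= 0 -> v x = 0) ->
   (forall x, 0 < dotZ q x -> Rabs (v x - dotZ q x) <= Bd) ->
   forall x, u x <= v x.
Proof.
move=> Hq A1 A2 A3 B1 B2 B3 x.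
case: (Rle_lt_dec (dotZ q x) 0) => Hx; first by rewrite A2 // B2 //; lra.
have := @cmp d q (fun y => 1 * u y + -1 * v y) Hq.
move=> /(_ _ _ _ x Hx) H; suff : 1 * u x + -1 * v x <= 0 by lra.
apply: H.
- by move=> y Hy; rewrite Lap_lin A1 // B1 //; lra.
- by move=> y _ Hy; rewrite A2 // B2 //; lra.
- exists (2 * Bd) => y Hy; have := A3 y Hy; have := B3 y Hy.
  have := abs_bounds (u y - dotZ q y); have := abs_bounds (v y - dotZ q y); lra.
Qed.

Lemma sol_unique d (q : vec d) u v : vnonzero q -> IsSol q u -> IsSol q v -> forall x, u x = v x.
Proof.
move=> Hq [Hu1 [Hu2 [Mu Hu3]]] [Hv1 [Hv2 [Mv Hv3]]] x.
have Hu3' : forall x, 0 < dotZ q x -> Rabs (u x - dotZ q x) <= Rabs Mu + Rabs Mv.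
  by move=> y Hy; have := Hu3 y Hy; have := Rle_abs Mu; have := Rabs_pos Mv; lra.
have Hv3' : forall x, 0 < dotZ q x -> Rabs (v x - dotZ q x) <= Rabs Mu + Rabs Mv.
  by move=> y Hy; have := Hv3 y Hy; have := Rle_abs Mv; have := Rabs_pos Mu; lra.
apply: Rle_antisym; [apply: (sol_le Hq Hu1 Hu2 Hu3' Hv1 Hv2 Hv3')| apply: (sol_le Hq Hv1 Hv2 Hv3' Hu1 Hu2 Hu3')].
Qed.

Lemma usol_perron d (q : vec d) : vnonzero q -> u_sol q = perron q.
Proof.
move=> Hq; apply: functional_extensionality => x.
apply: (sol_unique Hq); last exact: perron_sol.
rewrite /u_sol; apply: epsilon_spec; exists (perron q); exact: perron_sol.
Qed.

Lemma perron_bounds d (q : vec d) y : vnonzero q ->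
  Rmax (dotZ q y) 0 <= perron q y <= Rmax (dotZ q y) 0 + L1 q.
Proof.
move=> Hq; have [H1 H2] := perron_Pc Hq; have := L1_ge0 q.
case: (Rle_lt_dec (dotZ q y) 0) => Hy.
- rewrite H1 // Rmax_right //; lra.
- have := H2 y Hy; rewrite Rmax_left; lra.
Qed.

Lemma perron_Lap_ge0 d (q : vec d) x : vnonzero q -> 0 <= Lap (perron q) x.
Proof.
move=> Hq; have [H1 H2] := perron_Pc Hq.
case: (Rle_lt_dec (dotZ q x) 0) => Hx.
- rewrite Lap_nb H1 //.
  have : 0 <= nb (perron q) x.
    apply: sumI_ge0 => i.
    have := perron_bounds (Defs.shift x i 1) Hq; have := perron_bounds (Defs.shift x i (-1)) Hq.
    have := Rmax_r (dotZ q (Defs.shift x i 1)) 0; have := Rmax_r (dotZ q (Defs.shift x i (-1))) 0.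
    lra.
  lra.
- rewrite perron_harm //; lra.
Qed.

Lemma H_nb d (q : vec d) : vnonzero q -> H q = nb (perron q) (@origin d).
Proof.
move=> Hq; rewrite /H usol_perron // Lap_nb.
have [H1 _] := perron_Pc Hq; rewrite H1; last by rewrite dot_origin; lra.
ring.
Qed.

Lemma dot_shift0 d (q : vec d) i s : dotZ q (Defs.shift (@origin d) i s) = q i * IZR s.
Proof. rewrite dot_shift dot_origin; ring. Qed.

Lemma H_bounds d (q : vec d) : vnonzero q -> L1 q <= H q <= L1 q + 2 * L1 q * INR d.
Proof.
move=> Hq; rewrite H_nb //; split.
- apply: sumI_le => i.
  have := perron_bounds (Defs.shift (@origin d) i 1) Hq; have := perron_bounds (Defs.shift (@origin d) i (-1)) Hq.
  rewrite !dot_shift0.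
  have -> : q i * IZR 1 = q i by ring. have -> : q i * IZR (-1) = - q i by ring.
  rewrite /Rmax; case: Rle_dec => H1; case: Rle_dec => H2.
  1-4: move=> A B; case: (Rle_lt_dec 0 (q i)) => Hs; [rewrite Rabs_right | rewrite Rabs_left]; lra.
- have -> : L1 q + 2 * L1 q * INR d = sumI (fun i => Rabs (q i) + (L1 q + L1 q)).
    rewrite sumI_add sumI_const /L1; ring.
  apply: sumI_le => i.
  have := perron_bounds (Defs.shift (@origin d) i 1) Hq; have := perron_bounds (Defs.shift (@origin d) i (-1)) Hq.
  rewrite !dot_shift0.
  have -> : q i * IZR 1 = q i by ring. have -> : q i * IZR (-1) = - q i by ring.
  rewrite /Rmax; case: Rle_dec => H1; case: Rle_dec => H2.
  all: move=> A B; case: (Rle_lt_dec 0 (q i)) => Hs; [rewrite Rabs_right | rewrite Rabs_left]; lra.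
Qed.

Lemma Lap_scal d (u : pt d -> R) a x : Lap (fun y => a * u y) x = a * Lap u x.
Proof. rewrite /Lap -sumI_scal; apply: sumI_ext => i; ring. Qed.

Lemma H_homog d (q : vec d) t : vnonzero q -> 0 < t -> H (vscale t q) = t * H q.
Proof.
move=> Hq Ht.
have Hq' : vnonzero (vscale t q).
  case: Hq => i Hi; exists i; rewrite /vscale; nra.
have Hsol : IsSol (vscale t q) (fun x => t * perron q x).
  have [S1 [S2 [M S3]]] := perron_sol Hq.
  split; [|split].
  - move=> x; rewrite dot_scale => Hx; rewrite Lap_scal S1; first ring. nra.
  - move=> x; rewrite dot_scale => Hx; rewrite S2; first ring.
    apply: Rnot_lt_le => H; nra.
  - exists (t * M) => x; rewrite dot_scale => Hx.
    have Hx' : 0 < dotZ q x by nra.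
    have -> : t * perron q x - t * dotZ q x = t * (perron q x - dotZ q x) by ring.
    rewrite Rabs_mult Rabs_right; last lra.
    apply: Rmult_le_compat_l; [lra| exact: S3].
rewrite /H usol_perron // usol_perron //.
have -> : perron (vscale t q) = fun x => t * perron q x.
  apply: functional_extensionality => x; exact: (sol_unique Hq' (perron_sol Hq') Hsol x).
by rewrite Lap_scal.
Qed.

From Stdlib Require Import List.

Definition Zlist (Zb : Z) : list Z :=
  List.map (fun k => (Z.of_nat k - Zb)%Z) (List.seq 0 (Z.to_nat (2*Zb+1))).

Lemma Zlist_in Zb z : (- Zb <= z <= Zb)%Z -> List.In z (Zlist Zb).
Proof.
move=> H; rewrite /Zlist; apply/in_map_iff; exists (Z.to_nat (z + Zb)); split.
- rewrite Z2Nat.id; lia.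
- apply/in_seq; lia.
Qed.

Lemma Zabs_bound (z : Z) r : Rabs (IZR z) <= r -> (- up r <= z <= up r)%Z.
Proof.
move=> H; have [H1 _] := archimed r; have := abs_bounds (IZR z).
move=> Hb; split; [apply: le_IZR; rewrite opp_IZR| apply: le_IZR]; lra.
Qed.

Lemma vals_fin d (p : vec d) r (l : list 'I_d) : exists V : list R,
  forall y : pt d, bx r y -> List.In (sumL l (fun i => p i * IZR (y i))) V.
Proof.
elim: l => [|i l [V HV]].
- by exists (0 :: nil) => y _; left.
- exists (List.flat_map (fun v => List.map (fun z => p i * IZR z + v) (Zlist (up r))) V) => y Hy.
  apply/in_flat_map; exists (sumL l (fun i => p i * IZR (y i))); split; first exact: HV.
  apply/in_map_iff; exists (y i); split => //.
  apply: Zlist_in; apply: Zabs_bound; exact: Hy.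
Qed.

Lemma min_pos (V : list R) : exists d0, 0 < d0 /\ forall v, List.In v V -> 0 < v -> d0 <= v.
Proof.
elim: V => [|v V [d0 [Hd0 HV]]].
- exists 1; split => //; lra.
- case: (Rle_lt_dec v 0) => Hv.
  + exists d0; split => // w [<-|Hw] Hw0; [lra| exact: HV].
  + exists (Rmin d0 v); split; first by apply: Rmin_pos.
    move=> w [<-|Hw] Hw0; first exact: Rmin_r.
    have := Rmin_l d0 v; have := HV w Hw Hw0; lra.
Qed.

Lemma dot_gap d (p : vec d) r : exists d0, 0 < d0 /\
  forall y : pt d, bx r y -> 0 < dotZ p y -> d0 <= dotZ p y.
Proof.
have [V HV] := vals_fin p r (enum 'I_d).
have [d0 [Hd0 Hm]] := min_pos V.
exists d0; split => // y Hy Hp; apply: Hm => //; exact: HV.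
Qed.

Lemma L1_tri d (p q : vec d) : L1 q <= L1 p + L1 (vsub q p).
Proof.
rewrite /L1 -sumI_add; apply: sumI_le => i; rewrite /vsub.
have -> : q i = p i + (q i - p i) by ring. have -> : p i + (q i - p i) - p i = q i - p i by ring.
apply: Rabs_triang.
Qed.

Lemma bx_nbr0 d i s : Rabs (IZR s) <= 1 -> bx 1 (Defs.shift (@origin d) i s).
Proof.
move=> Hs; have := @bx_shift d (@origin d) 0 i s; rewrite Rplus_0_l; apply => // j.
rewrite /origin Rabs_R0; lra.
Qed.

Lemma sqa x : x * x = Rabs x * Rabs x.
Proof. case: (Rle_lt_dec 0 x) => Hs; [rewrite Rabs_right| rewrite Rabs_left]; lra. Qed.

Lemma lsc d (p : vec d) : vnonzero p -> forall eps, 0 < eps -> exists delta, 0 < delta /\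
  forall q : vec d, vnonzero q -> vnorm (vsub q p) < delta -> H p - eps <= H q.
Proof.
move=> Hp eps He.
have Hd := nz_d Hp; have HLp := nz_L1 Hp.
have [i0 Hi0] := Hp.
set M := L1 p + 1.
set nu := p i0 * p i0 / 4.
have Hnu : 0 < nu.
  have : 0 < p i0 * p i0 by apply: Rsqr_pos_lt.
  rewrite /nu; lra.
set K := L1 p + 1.
set a := aco (INR d) M nu.
have Ha : 0 <= a.
  rewrite /a /aco; apply: Rle_mult_inv_pos; last lra.
  apply: Rmult_le_pos; first (rewrite /M; nra).
  have : 0 <= 4 * INR d * M * M / nu by apply: Rle_mult_inv_pos; rewrite /M; nra.
  lra.
set At := 2 * a * M + INR d + INR d / nu * (M * M).
have HAt : 0 <= At.
  rewrite /At; have : 0 <= INR d / nu * (M * M) by apply: Rmult_le_pos; [apply: Rle_mult_inv_pos|]; rewrite /M; nra.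
  have : 0 <= a * M by rewrite /M; nra.
  lra.
set Rr := 1 + 4 * INR d * K * At / eps.
have HK0 : 0 <= K by rewrite /K; lra.
have HQ : 0 <= 4 * INR d * K * At / eps.
  apply: Rle_mult_inv_pos; last lra; apply: Rmult_le_pos; [apply: Rmult_le_pos|]; lra.
have HR : 1 <= Rr by rewrite /Rr; lra.
have [d0 [Hd0 Hgap]] := dot_gap p (Rr + 1).
set T := INR d * (Rr + 1).
have HT : 0 < T by rewrite /T; nra.
set delta := Rmin (Rmin (1 / T) (d0 / T)) (Rabs (p i0) / 2).
have Hpi0 : 0 < Rabs (p i0) by apply: Rabs_pos_lt.
have Hdelta : 0 < delta.
  rewrite /delta; apply: Rmin_pos; [apply: Rmin_pos|]; try apply: Rdiv_lt_0_compat; lra.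
exists delta; split => // q Hq Hvn.
have Hdl1 : delta <= 1 / T by have := Rmin_l (Rmin (1 / T) (d0 / T)) (Rabs (p i0) / 2); have := Rmin_l (1/T) (d0/T); rewrite /delta; lra.
have Hdl2 : delta <= d0 / T by have := Rmin_l (Rmin (1 / T) (d0 / T)) (Rabs (p i0) / 2); have := Rmin_r (1/T) (d0/T); rewrite /delta; lra.
have Hdl3 : delta <= Rabs (p i0) / 2 by apply: Rmin_r.
set vn := vnorm (vsub q p).
have Hvn1 : vn < delta by exact: Hvn.
have Hvn0 : 0 <= vn by rewrite /vn /vnorm; apply: sqrt_pos.
have HL1d : L1 (vsub q p) <= INR d * vn by apply: L1_le_vnorm.
have HdT : INR d * vn * (Rr + 1) < 1 /\ INR d * vn * (Rr + 1) < d0.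
  have : vn * T < 1 /\ vn * T < d0.
    split.
    - have : vn < 1 / T by lra.
      move=> H; have := Rmult_lt_compat_r T _ _ HT H; have -> : 1 / T * T = 1 by field; lra. done.
    - have : vn < d0 / T by lra.
      move=> H; have := Rmult_lt_compat_r T _ _ HT H; have -> : d0 / T * T = d0 by field; lra. done.
  rewrite /T; have -> : INR d * vn * (Rr + 1) = vn * (INR d * (Rr + 1)) by ring. done.
have Hdiff : forall y, bx (Rr + 1) y -> Rabs (dotZ q y - dotZ p y) <= INR d * vn * (Rr + 1).
  move=> y Hy; rewrite dot_sub; eapply Rle_trans; first exact: dot_bound.
  apply: Rmult_le_compat_r; [lra| exact: HL1d].
have HMq : L1 q <= M.
  have := L1_tri p q; have : INR d * vn < 1.
    have : INR d * vn * (Rr + 1) >= INR d * vn * 1.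
      apply: Rle_ge; apply: Rmult_le_compat_l; [nra| lra].
    lra.
  rewrite /M; lra.
have HnuN : nu <= N2 q.
  have := sq_le_N2 q i0.
  have : Rabs (q i0 - p i0) <= vn by apply: (abs_le_vnorm (vsub q p) i0).
  move=> H1 H2.
  have : Rabs (p i0) / 2 <= Rabs (q i0).
    have := Rabs_triang (q i0) (- (q i0 - p i0)); have -> : q i0 + - (q i0 - p i0) = p i0 by ring.
    rewrite Rabs_Ropp; lra.
  move=> H3; have : Rabs (p i0) / 2 * (Rabs (p i0) / 2) <= Rabs (q i0) * Rabs (q i0).
    apply: Rmult_le_compat; lra.
  have E1 := sqa (q i0).
  have E2 := sqa (p i0).
  rewrite /nu E2; lra.
have [Pq1 Pq2] := perron_Pc Hq.
have [Pp1 Pp2] := perron_Pc Hp.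
have Hsign : forall y, bx (Rr + 1) y -> dotZ q y <= 0 -> dotZ p y <= 0.
  move=> y Hy Hqy; apply: Rnot_lt_le => Hpy.
  have := Hgap y Hy Hpy; have := Hdiff y Hy; have := abs_bounds (dotZ q y - dotZ p y).
  case: HdT => _ H; lra.
set w := fun y => 1 * perron p y + -1 * perron q y.
have Hepsd : 0 < eps / (2 * INR d) by apply: Rdiv_lt_0_compat; lra.
have Hw : forall x0, bx 1 x0 -> w x0 <= eps / (2 * INR d).
  move=> x0 Hx0.
  have Hx0' : bx (Rr + 1) x0 by apply: bx_mono Hx0; lra.
  case: (Rle_lt_dec (dotZ q x0) 0) => Hqx.
  - rewrite /w Pq1 // Pp1; first lra. exact: Hsign.
  have HH1 : forall x, 0 < dotZ q x -> bx Rr x -> 0 <= Lap w x.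
    move=> x Hx _; rewrite /w Lap_lin (@perron_harm d q x) //; have := perron_Lap_ge0 x Hp; lra.
  have HH2 : forall y, bx (Rr+1) y -> - M < dotZ q y -> dotZ q y <= 0 -> w y <= 0.
    move=> y Hy _ Hqy; rewrite /w Pq1 // Pp1; first lra. exact: Hsign.
  have HH3 : forall y, bx (Rr+1) y -> 0 < dotZ q y -> w y <= K.
    move=> y Hy Hqy.
    have [A1 [A2 _]] := Pq2 y Hqy.
    have Hb := perron_bounds y Hp.
    have := Hdiff y Hy; have := abs_bounds (dotZ q y - dotZ p y).
    rewrite /w /K; case: HdT => H1 _.
    move: Hb; rewrite /Rmax; case: (Rle_dec (dotZ p y) 0) => Hr /= Hb; lra.
  have Hf := @fmp d q M nu Rr K w Hq HMq Hnu HnuN HR HK0 HH1 HH2 HH3 x0 Hqx (bx_mono HR Hx0).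
  rewrite -/a in Hf.
  have Hdq : dotZ q x0 <= M.
    have := dot_bound q Hx0; have := abs_bounds (dotZ q x0); lra.
  have Hsq : sq x0 <= INR d by have := sq_bx Hx0; lra.
  have Hsq0 := sq_ge0 x0.
  have HR0 : 0 < Rr by lra.
  have I1 : a * (dotZ q x0 + M) / Rr <= 2 * a * M / Rr.
    apply: Rmult_le_compat_r; [left; apply: Rinv_0_lt_compat; lra| nra].
  have I2 : (sq x0 + INR d / nu * (M * M)) / (Rr * Rr) <= (INR d + INR d / nu * (M * M)) / Rr.
    have Hc : 0 <= INR d / nu * (M * M) by apply: Rmult_le_pos; [apply: Rle_mult_inv_pos|]; rewrite /M; nra.
    have -> : (sq x0 + INR d / nu * (M * M)) / (Rr * Rr) = ((sq x0 + INR d / nu * (M * M)) / Rr) / Rr by field; lra.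
    have J : (sq x0 + INR d / nu * (M * M)) / Rr <= (INR d + INR d / nu * (M * M)).
      apply: (Rmult_le_reg_r Rr) => //.
      have -> : (sq x0 + INR d / nu * (M * M)) / Rr * Rr = sq x0 + INR d / nu * (M * M) by field; lra.
      nra.
    apply: Rmult_le_compat_r; [left; apply: Rinv_0_lt_compat; lra| exact: J].
  have I3 : 2 * a * M / Rr + (INR d + INR d / nu * (M * M)) / Rr = At / Rr by rewrite /At; field; lra.
  have I4 : 2 * K * (At / Rr) <= eps / (2 * INR d).
    apply: (Rmult_le_reg_r (2 * INR d * Rr)); first nra.
    have -> : eps / (2 * INR d) * (2 * INR d * Rr) = eps * Rr by field; lra.
    have -> : 2 * K * (At / Rr) * (2 * INR d * Rr) = 4 * INR d * K * At by field; lra.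
    have : 4 * INR d * K * At = eps * (4 * INR d * K * At / eps) by field; lra.
    rewrite /Rr; nra.
  have := Rmult_le_compat_l (2 * K) _ _ (ltac:(lra) : 0 <= 2 * K) (Rplus_le_compat _ _ _ _ I1 I2).
  rewrite I3; lra.
rewrite (H_nb Hp) (H_nb Hq).
have : nb (perron p) (@origin d) - nb (perron q) (@origin d) <= eps.
  rewrite /nb -sumI_sub.
  have -> : eps = sumI (fun _ : 'I_d => eps / (2 * INR d) + eps / (2 * INR d)).
    rewrite sumI_const; field; lra.
  apply: sumI_le => i.
  have := Hw _ (bx_nbr0 i R1abs); have := Hw _ (bx_nbr0 i Rm1abs); rewrite /w; lra.
lra.
Qed.

Unset Implicit Arguments.

Theorem mainTheorem4 (d : nat) :
  exists C : R, 0 < C /\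
    forall (p : vec d), vnonzero p ->
      (forall t : R, 0 < t -> H (vscale t p) = t * H p) /\
      (/ C * vnorm p <= H p /\ H p <= C * vnorm p) /\
      (forall eps : R, 0 < eps -> exists delta : R, 0 < delta /\
         forall q : vec d, vnonzero q -> vnorm (vsub q p) < delta ->
           H p - eps <= H q).
Proof.
have Hd0 := pos_INR d.
exists ((1 + 2 * INR d) * INR d + 1); split; first nra.
move=> p Hp; split; [|split].
- by move=> t Ht; apply: H_homog.
- have [Hl Hu] := H_bounds Hp.
  have Hv0 : 0 <= vnorm p by apply: sqrt_pos.
  have := vnorm_le_L1 p; have := L1_le_vnorm p.
  move=> H1 H2; split.
  + have : / ((1 + 2 * INR d) * INR d + 1) <= 1.
      rewrite -Rinv_1; apply: Rinv_le_contravar; nra.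
    move=> Hi; have : / ((1 + 2 * INR d) * INR d + 1) * vnorm p <= vnorm p.
      have : 0 < / ((1 + 2 * INR d) * INR d + 1) by apply: Rinv_0_lt_compat; nra.
      nra.
    lra.
  + have : L1 p + 2 * L1 p * INR d = (1 + 2 * INR d) * L1 p by ring.
    move=> E; rewrite E in Hu.
    have : (1 + 2 * INR d) * L1 p <= (1 + 2 * INR d) * (INR d * vnorm p) by apply: Rmult_le_compat_l; lra.
    nra.
- exact: lsc.
Qed.
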